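(* Let $T\in\mathrm{Aut}(X,\mu)$, let $P\in\mathrm{Aut}(X,\mu)$ be periodic with fundamental domain $D$, and set $U=T_DP$. Then: (i) $U_D=T_D$; (ii) for almost every $x\in D$, the first return time of $U$ to $D$ at $x$, $\min\{n\ge1:U^n(x)\in D\}$, equals the cardinality of the $P$-orbit of $x$; (iii) if moreover $P\in[T]$, then $T$ and $U$ have the same orbits.
   Context: $(X,\mu)$ standard atomless probability space; $\mathrm{Aut}(X,\mu)$ measure-preserving transformations modulo null sets. $P$ is periodic if almost every $P$-orbit is finite; a fundamental domain of $P$ is a measurable set meeting almost every $P$-orbit in exactly one point. $[T]$ is the set of $V\in\mathrm{Aut}(X,\mu)$ with $V(x)$ in the $T$-orbit of $x$ for a.e. $x$. For $V\in\mathrm{Aut}(X,\mu)$ and measurable $B$, the first return map $V_B$ is $V_B(x)=V^{n(x)}(x)$ with $n(x)=\min\{n\ge1:V^n(x)\in B\}$ for $x\in B$, and $V_B(x)=x$ for $x\notin B$. Having the same orbits means the orbits of a.e. point coincide. *)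

(* Defs.v *)
From HB Require Import structures.
From mathcomp Require Import all_boot all_order all_algebra.
From mathcomp Require Import all_classical all_reals all_analysis.
Set Implicit Arguments. Unset Strict Implicit. Unset Printing Implicit Defensive.
Import Order.TTheory GRing.Theory Num.Theory.
Local Open Scope classical_set_scope.
Local Open Scope ring_scope.

Section Defs.
Context {d : measure_display} {X : measurableType d} {R : realType}.

Definition atomless (mu : set X -> \bar R) : Prop :=
  forall A, measurable A -> (0 < mu A)%E ->
    exists B, [/\ measurable B, B `<=` A, (0 < mu B)%E & (mu B < mu A)%E].

Definition mp_aut (mu : set X -> \bar R) (V : X -> X) : Prop :=
  exists W : X -> X, [/\ cancel V W, cancel W V,
    measurable_fun setT V, measurable_fun setT W &
    forall A, measurable A -> mu (V @^-1` A) = mu A].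

(** the V-orbitV of x (V a bijection): all V^n x, n in Z *)
Definition orbitV (V : X -> X) (x : X) : set X :=
  [set y | exists n : nat, iter n V x = y \/ iter n V y = x].

Definition is_return_time (V : X -> X) (B : set X) (x : X) (n : nat) : Prop :=
  [/\ (0 < n)%N, B (iter n V x) &
      forall m, (0 < m)%N -> (m < n)%N -> ~ B (iter m V x)].

(** first return time (0 if V never returns to B) *)
Definition return_time (V : X -> X) (B : set X) (x : X) : nat :=
  xget 0%N (is_return_time V B x).

Definition first_return (V : X -> X) (B : set X) (x : X) : X :=
  if `[< B x >] then iter (return_time V B x) V x else x.

Definition is_periodic (mu : set X -> \bar R) (P : X -> X) : Prop :=
  {ae mu, forall x, finite_set (orbitV P x)}.

Definition fund_domain (mu : set X -> \bar R) (P : X -> X) (D : set X)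
  : Prop :=
  measurable D /\ {ae mu, forall x, exists! y, orbitV P x y /\ D y}.

Definition in_fullgroup (mu : set X -> \bar R) (T V : X -> X) : Prop :=
  {ae mu, forall x, orbitV T x (V x)}.

End Defs.

(* Main.v *)
Require Import Defs.
From HB Require Import structures.
From mathcomp Require Import all_boot all_order all_algebra.
From mathcomp Require Import all_classical all_reals all_analysis.
Set Implicit Arguments. Unset Strict Implicit. Unset Printing Implicit Defensive.
Local Open Scope classical_set_scope.
Local Open Scope ring_scope.
Local Open Scope card_scope.

Lemma iter_inj {d} {T : measurableType d} (V : T -> T) : injective V -> forall n, injective (iter n V).
Proof. by move=> iV; elim=> [|n IH] x y //= /iV; exact: IH. Qed.

Lemma iter_canc {d} {T : measurableType d} (V : T -> T) a b x y : injective V ->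
  iter (a + b) V x = iter a V y -> iter b V x = y.
Proof. by move=> iV; rewrite iterD => /(iter_inj iV). Qed.

Lemma orb_refl {d} {T : measurableType d} (V : T -> T) x : orbitV V x x.
Proof. by exists 0%N; left. Qed.

Lemma orb_sym {d} {T : measurableType d} (V : T -> T) x y : orbitV V x y -> orbitV V y x.
Proof. by case=> n [e|e]; exists n; [right|left]. Qed.

Lemma orb_iter {d} {T : measurableType d} (V : T -> T) x n : orbitV V x (iter n V x).
Proof. by exists n; left. Qed.

Lemma orb_iter2 {d} {T : measurableType d} (V : T -> T) z a b : orbitV V (iter a V z) (iter b V z).
Proof.
case: (leqP a b) => h.
  by exists (b - a)%N; left; rewrite -iterD subnK.
by exists (a - b)%N; right; rewrite -iterD subnK // ltnW.
Qed.

Lemma orb_trans {d} {T : measurableType d} (V : T -> T) x y z : injective V ->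
  orbitV V x y -> orbitV V y z -> orbitV V x z.
Proof.
move=> iV [n [e|e]] [m [f|f]]; subst.
- by exists (m + n)%N; left; rewrite iterD.
- case: (leqP n m) => h.
    exists (m - n)%N; right; apply: (@iter_canc _ _ V n) => //.
    by rewrite subnKC.
  exists (n - m)%N; left; apply: (@iter_canc _ _ V m) => //.
  by rewrite subnKC // ltnW.
- exact: orb_iter2.
- by exists (n + m)%N; right; rewrite iterD.
Qed.

Lemma iter_period {d} {T : measurableType d} (V : T -> T) w p k :
  iter p V w = w -> iter (k * p) V w = w.
Proof. by move=> hp; elim: k => [|k IH] //; rewrite mulSn iterD IH. Qed.

Lemma periodic_reach {d} {T : measurableType d} (V : T -> T) w p v :
  injective V -> (0 < p)%N -> iter p V w = w -> orbitV V w v ->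
  exists m, (m < p)%N /\ iter m V w = v.
Proof.
move=> iV p0 hp.
have fwd n : exists m, (m < p)%N /\ iter m V w = iter n V w.
  exists (n %% p)%N; split; first by rewrite ltn_mod.
  by rewrite {2}(divn_eq n p) addnC iterD iter_period.
case=> n [e|e].
  by have [m [? h]] := fwd n; exists m; rewrite h e.
have [m [? h]] := fwd (n * p - n)%N; exists m; split => //; rewrite h.
apply: (@iter_canc _ _ V n) => //; rewrite subnKC ?leq_pmulr //.
by rewrite e iter_period.
Qed.

Lemma finite_orbit_period {d} {T : measurableType d} (V : T -> T) x :
  injective V -> finite_set (orbitV V x) ->
  exists p, (0 < p)%N /\ iter p V x = x.
Proof.
move=> iV fin; apply: contrapT => NP.
have hinj : {in [set: nat] &, injective (fun n => iter n V x)}.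
  move=> i j _ _ /= e.
  case: (ltngtP i j) => h //; exfalso.
    apply: NP; exists (j - i)%N; split; first by rewrite subn_gt0.
    by apply: (@iter_canc _ _ V i) => //; rewrite subnKC // ltnW.
  apply: NP; exists (i - j)%N; split; first by rewrite subn_gt0.
  by apply: (@iter_canc _ _ V j) => //; rewrite subnKC // ltnW.
apply: infinite_nat; have hh := @eq_finite_set _ _ _ _ (inj_card_eq hinj).
simpl in hh. rewrite -hh.
apply: sub_finite_set fin => y [n _ <-]; exact: orb_iter.
Qed.

Lemma min_period {d} {T : measurableType d} (V : T -> T) x :
  (exists p, (0 < p)%N /\ iter p V x = x) ->
  exists k, [/\ (0 < k)%N, iter k V x = x &
    forall m, (0 < m)%N -> (m < k)%N -> iter m V x <> x].
Proof.
move=> [p hp].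
have exP : exists n, `[< (0 < n)%N /\ iter n V x = x >] by exists p; apply/asboolP.
case: (ex_minnP exP) => k /asboolP [k0 hk] hmin; exists k; split => // m m0 mk e.
by have := hmin m (asboolT (conj m0 e)); rewrite leqNgt mk.
Qed.

Lemma fr_notin {d} {T : measurableType d} (V : T -> T) B x :
  ~ B x -> first_return V B x = x.
Proof. by move=> h; rewrite /first_return asboolF. Qed.

Lemma fr_in {d} {T : measurableType d} (V : T -> T) B x :
  B x -> first_return V B x = iter (return_time V B x) V x.
Proof. by move=> h; rewrite /first_return (asboolT h). Qed.

Lemma rt_unique {d} {T : measurableType d} (V : T -> T) B x r r' :
  is_return_time V B x r -> is_return_time V B x r' -> r = r'.
Proof.
case=> r0 Br hr [r0' Br' hr']; case: (ltngtP r r') => // h.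
  by case: (hr' r r0 h Br).
by case: (hr r' r0' h Br').
Qed.

Lemma rt_eq {d} {T : measurableType d} (V : T -> T) B x r :
  is_return_time V B x r -> return_time V B x = r.
Proof. by move=> h; have := xgetI 0%N h; move/rt_unique; apply. Qed.

Lemma fr_B {d} {T : measurableType d} (V : T -> T) B x :
  B x -> B (first_return V B x).
Proof.
move=> Bx; rewrite fr_in //.
case: (pselect (exists r, is_return_time V B x r)) => [[r h]|N].
  by rewrite (rt_eq h); case: h.
by rewrite /return_time xgetPN // => r h; apply: N; exists r.
Qed.

Lemma fr_orb {d} {T : measurableType d} (V : T -> T) B x :
  orbitV V x (first_return V B x).
Proof.
case: (pselect (B x)) => h; first by rewrite fr_in //; exact: orb_iter.
by rewrite fr_notin //; exact: orb_refl.
Qed.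

Lemma fr_reach {d} {T : measurableType d} (V : T -> T) B m x :
  B x -> B (iter m V x) ->
  exists j, iter j (first_return V B) x = iter m V x.
Proof.
elim/ltn_ind: m x => m IH x Bx Bm.
case: (posnP m) => [->|m0]; first by exists 0%N.
have exP : exists n, `[< (0 < n)%N /\ B (iter n V x) >]
  by exists m; apply/asboolP.
case: (ex_minnP exP) => r /asboolP [r0 Br] hmin.
have rm : (r <= m)%N by apply: hmin; apply/asboolP.
have hr : is_return_time V B x r.
  split => // m' m'0 m'r Bm'.
  by have := hmin m' (asboolT (conj m'0 Bm')); rewrite leqNgt m'r.
have e : iter m V x = iter (m - r) V (iter r V x) by rewrite -iterD subnK.
have [|||j hj] := IH (m - r)%N _ (iter r V x) => //.
- by rewrite ltn_subrL r0.
- by rewrite -e.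
exists j.+1; rewrite iterSr fr_in // (rt_eq hr) hj -e //.
Qed.

Lemma core {d} {X : measurableType d} (T P : X -> X) D z :
  injective P -> D z -> finite_set (orbitV P z) ->
  (exists! y, orbitV P z y /\ D y) ->
  exists k, [/\ (0 < k)%N, iter k P z = z,
    (forall m, (0 < m)%N -> (m < k)%N -> ~ D (iter m P z) /\ iter m P z <> z),
    (forall j, (j < k)%N -> iter j (first_return T D \o P) z = iter j P z) &
    iter k (first_return T D \o P) z = first_return T D z].
Proof.
move=> iP Dz fin [y [[oy Dy] uy]].
have [k [k0 hk hmin]] := min_period (finite_orbit_period iP fin).
have nD m : (0 < m)%N -> (m < k)%N -> ~ D (iter m P z).
  move=> m0 mk Dm; apply: (hmin m m0 mk).
  have e1 := uy z (conj (orb_refl _ _) Dz).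
  have e2 := uy _ (conj (orb_iter P z m) Dm).
  by rewrite -e2 e1.
have hj : forall j, (j < k)%N ->
    iter j (first_return T D \o P) z = iter j P z.
  elim=> [|j IH] // jk.
  rewrite iterS IH ?(ltnW jk) //= -iterS fr_notin //; exact: nD.
exists k; split => //.
  by move=> m m0 mk; split; [exact: nD|exact: hmin].
have e : k = k.-1.+1 by rewrite prednK.
rewrite e iterS hj /=; last by rewrite ltn_predL.
by rewrite -iterS -e hk.
Qed.

Lemma ae_pull {d} {X : measurableType d} {R : realType}
  (mu : {measure set X -> \bar R}) (V : X -> X) (Q : X -> Prop) :
  measurable_fun setT V -> (forall A, measurable A -> mu (V @^-1` A) = mu A) ->
  {ae mu, forall x, Q x} -> {ae mu, forall x, Q (V x)}.
Proof.
move=> mV pV [N [mN N0 sN]]; exists (V @^-1` N); split.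
- by rewrite -[_ @^-1` _]setTI; apply: mV.
- by rewrite pV.
- by move=> x /= nQ; apply: sN.
Qed.

Lemma ae_iter {d} {X : measurableType d} {R : realType}
  (mu : {measure set X -> \bar R}) (V : X -> X) (Q : X -> Prop) n :
  measurable_fun setT V -> (forall A, measurable A -> mu (V @^-1` A) = mu A) ->
  {ae mu, forall x, Q x} -> {ae mu, forall x, Q (iter n V x)}.
Proof.
move=> mV pV; elim: n Q => [|n IH] Q hQ //.
have := ae_pull mV pV (IH Q hQ).
by apply: filterS => x; rewrite iterSr.
Qed.

Lemma orbits_eq {d} {X : measurableType d} (T P : X -> X) D x :
  injective T -> injective P ->
  (forall w, orbitV T x w -> [/\ finite_set (orbitV P w),
     (exists! y, orbitV P w y /\ D y) & orbitV T w (P w)]) ->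
  orbitV T x = orbitV (first_return T D \o P) x.
Proof.
move=> iT iP hG.
have St w v : orbitV T x w -> orbitV T w v -> orbitV T x v.
  by move=> a b; exact: (orb_trans iT a b).
have F1 w n : orbitV T x w -> orbitV T x (iter n P w).
  move=> Sw; elim: n => [|n IH] //; rewrite iterS.
  by apply: (St _ _ IH); case: (hG _ IH).
have F2 w v : orbitV T x w -> orbitV P w v -> orbitV T x v.
  move=> Sw owv; have [fin _ _] := hG _ Sw.
  have [p [p0 hp]] := finite_orbit_period iP fin.
  have [m [_ <-]] := periodic_reach iP p0 hp owv; exact: F1.
have F4 w : orbitV T x w -> orbitV T x ((first_return T D \o P) w).
  move=> Sw; have [_ _ oP] := hG _ Sw; have SP := St _ _ Sw oP.
  exact: (St _ _ SP (fr_orb _ _ _)).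
have F4' w n : orbitV T x w -> orbitV T x (iter n (first_return T D \o P) w).
  by move=> Sw; elim: n => [|n IH] //; rewrite iterS; exact: F4.
have F5 y : orbitV T x ((first_return T D \o P) y) -> orbitV T x y.
  move=> SU; have SP : orbitV T x (P y).
    case: (pselect (D (P y))) => h.
      by apply: (St _ _ SU); apply: orb_sym; exact: fr_orb.
    by move: SU; rewrite /= fr_notin.
  by apply: (F2 _ _ SP); exists 1%N; right.
have F5' y n : orbitV T x (iter n (first_return T D \o P) y) -> orbitV T x y.
  by elim: n y => [|n IH] y //; rewrite iterSr => h; exact: F5 (IH _ h).
have Sx : orbitV T x x := orb_refl _ _.
have dec w : orbitV T x w -> exists w0 i,
    [/\ orbitV T x w0, D w0 & iter i (first_return T D \o P) w0 = w].
  move=> Sw; have [finw hu _] := hG _ Sw; case: hu => w0 [ho _]; case: ho => o0 D0.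
  have S0 := F2 _ _ Sw o0.
  have [fin0 u0 _] := hG _ S0.
  have [k [k0 hk _ hj _]] := core T iP D0 fin0 u0.
  have [m [mk <-]] := periodic_reach iP k0 hk (orb_sym o0).
  by exists w0, m; split => //; rewrite hj.
have SiT z j : orbitV T x z -> orbitV T x (iter j (first_return T D) z).
  move=> Sz; elim: j => [|j IH] //; rewrite iterS.
  exact: (St _ _ IH (fr_orb _ _ _)).
have DiT z j : D z -> D (iter j (first_return T D) z).
  by move=> Dz; elim: j => [|j IH] //; rewrite iterS; exact: fr_B.
have reachU z j : orbitV T x z -> D z ->
    exists M, iter M (first_return T D \o P) z = iter j (first_return T D) z.
  move=> Sz Dz; elim: j => [|j [M hM]]; first by exists 0%N.
  have Sw := SiT z j Sz; have Dw := DiT z j Dz.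
  have [fin0 u0 _] := hG _ Sw.
  have [k [_ _ _ _ hk]] := core T iP Dw fin0 u0.
  by exists (k + M)%N; rewrite iterD hM hk iterS.
apply/seteqP; split => y.
  move=> Sy.
  have [x0 [i [Sx0 Dx0 ex]]] := dec _ Sx.
  have [y0 [i' [Sy0 Dy0 ey]]] := dec _ Sy.
  have o : orbitV T x0 y0 := orb_trans iT (orb_sym Sx0) Sy0.
  case: o => n [e|e].
    have [j hj] := fr_reach Dx0 (eq_ind_r D Dy0 e).
    have [M hM] := reachU x0 j Sx0 Dx0.
    by rewrite -ex -ey -e -hj -hM -iterD; exact: orb_iter2.
  have [j hj] := fr_reach Dy0 (eq_ind_r D Dx0 e).
  have [M hM] := reachU y0 j Sy0 Dy0.
  by rewrite -ex -ey -e -hj -hM -iterD; exact: orb_iter2.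
case=> n [e|e]; first by rewrite -e; exact: F4'.
by apply: (F5' y n); rewrite e.
Qed.

Lemma iter_TW {d} {X : measurableType d} (T W : X -> X) n w :
  cancel T W -> iter n W (iter n T w) = w.
Proof. by move=> TW; elim: n => [|n IH] //; rewrite iterSr iterS TW. Qed.

Theorem mainTheorem20 (d : measure_display) (X : measurableType d)
  (R : realType) (mu : probability X R) (Hatom : atomless mu)
  (T P : X -> X) (D : set X)
  (hT : mp_aut mu T) (hP : mp_aut mu P) (hper : is_periodic mu P)
  (hD : fund_domain mu P D) :
  let U := first_return T D \o P in
  [/\ {ae mu, forall x, first_return U D x = first_return T D x},
      {ae mu, forall x, D x -> exists n : nat,
          is_return_time U D x n /\ orbitV P x #= `I_n}
    & in_fullgroup mu T P ->
      {ae mu, forall x, orbitV T x = orbitV U x}].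
Proof.
move=> U; rewrite {}/U.
move: hT hP => [W [TW WT mT mW pT]] [Q [PQ QP mP mQ pP]].
have iT := can_inj TW; have iP := can_inj PQ.
case: hD => mD aeD; rewrite /is_periodic in hper.
have rtk x k : D x -> (0 < k)%N ->
    (forall m, (0 < m)%N -> (m < k)%N -> ~ D (iter m P x) /\ iter m P x <> x) ->
    (forall j, (j < k)%N -> iter j (first_return T D \o P) x = iter j P x) ->
    iter k (first_return T D \o P) x = first_return T D x ->
    is_return_time (first_return T D \o P) D x k.
  move=> Dx k0 hm hj hk; split => //; first by rewrite hk; exact: fr_B.
  by move=> m m0 mk; rewrite hj ?(ltnW mk) //; case: (hm m m0 mk).
split.
- apply: (filterS2 _ _ hper aeD) => x fin u.
  case: (pselect (D x)) => Dx; last by rewrite !fr_notin.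
  have [k [k0 hk hm hj hkU]] := core T iP Dx fin u.
  by rewrite fr_in // (rt_eq (rtk x k Dx k0 hm hj hkU)).
- apply: (filterS2 _ _ hper aeD) => x fin u Dx.
  have [k [k0 hk hm hj hkU]] := core T iP Dx fin u.
  exists k; split; first exact: rtk.
  have -> : orbitV P x = (fun i => iter i P x) @` `I_k.
    apply/seteqP; split => [y oy|y [i ik <-]]; last exact: orb_iter.
    by have [m [mk <-]] := periodic_reach iP k0 hk oy; exists m.
  apply: inj_card_eq => i j; rewrite !in_setE /= => ik jk e.
  case: (ltngtP i j) => h //; exfalso.
    have ee : iter (j - i) P x = x.
      by apply: (@iter_canc _ _ P i) => //; rewrite subnKC // ltnW.
    have h1 : (0 < j - i)%N by rewrite subn_gt0.
    have h2 : (j - i < k)%N by rewrite (leq_ltn_trans (leq_subr _ _) jk).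
    exact: (hm _ h1 h2).2 ee.
  have ee : iter (i - j) P x = x.
    by apply: (@iter_canc _ _ P j) => //; rewrite subnKC // ltnW.
  have h1 : (0 < i - j)%N by rewrite subn_gt0.
  have h2 : (i - j < k)%N by rewrite (leq_ltn_trans (leq_subr _ _) ik).
  exact: (hm _ h1 h2).2 ee.
- rewrite /in_fullgroup => hF.
  have pW A : measurable A -> mu (W @^-1` A) = mu A.
    move=> mA; have mWA : measurable (W @^-1` A).
      by rewrite -[W @^-1` A]setTI; apply: mW.
    have e : T @^-1` (W @^-1` A) = A by apply/seteqP; split=> y /=; rewrite TW.
    by rewrite -{2}e pT.
  have aeG : {ae mu, forall x, [/\ finite_set (orbitV P x),
      (exists! y, orbitV P x y /\ D y) & orbitV T x (P x)]}.
    by apply: (filterS3 _ _ hper aeD hF) => x a b c; split.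
  have aeall := ae_foralln (fun n => filterS2 (ae_filter_ringOfSetsType mu) (fun x a b => conj a b)
    (ae_iter n mT pT aeG) (ae_iter n mW pW aeG)).
  move: aeall; apply: filterS => x hx.
  apply: orbits_eq => // w [n [e|e]].
    by rewrite -e; case: (hx n).
  have -> : w = iter n W x by rewrite -e iter_TW.
  by case: (hx n).
Qed.
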